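(* Let $M\in\mathbb{R}^{D\times D}$ be symmetric positive semidefinite, let $L_*$ be a $d$-dimensional subspace of $\mathbb{R}^D$ with $1\le d<D$, and let $x=\sigma_{D-d}(U_{L_*^\perp}^\top MU_{L_*^\perp})$, $y=\sigma_d(U_{L_*}^\top MU_{L_*})$, $z=\|U_{L_*}^\top MU_{L_*^\perp}\|$. Then $$\sigma_D(M)\ge\frac{(x+y)-\sqrt{(x-y)^2+4z^2}}{2}.$$ If moreover $z\le\sqrt{xy}/2$, then $\sigma_D(M)\ge\min(x,y)/3$.
   Context: $U_{L_*}\in\mathbb{R}^{D\times d}$ and $U_{L_*^\perp}\in\mathbb{R}^{D\times(D-d)}$ have orthonormal columns spanning $L_*$ and its orthogonal complement. $\sigma_i(\cdot)$ denotes the $i$-th largest eigenvalue of a symmetric matrix, and $\|\cdot\|$ is the spectral norm. *)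

(* Defs.v *)
From HB Require Import structures.
From mathcomp Require Import all_boot all_order all_algebra.
From mathcomp Require Import boolp classical_sets reals.
Set Implicit Arguments. Unset Strict Implicit. Unset Printing Implicit Defensive.
Import Order.TTheory GRing.Theory Num.Theory.
Local Open Scope ring_scope.
Local Open Scope classical_set_scope.

Definition symmetric_mx (R : realType) (n : nat) (A : 'M[R]_n) := A^T = A.

Definition psd_mx (R : realType) (n : nat) (A : 'M[R]_n) :=
  forall v : 'cV[R]_n, 0 <= (v^T *m A *m v) 0 0.

(* Smallest eigenvalue (sigma_n, n = size) of a square real matrix:
   the infimum of the set of its (real) eigenvalues. For real symmetric
   matrices this set is finite and nonempty, so this is the minimum. *)
Definition lambda_min (R : realType) (n : nat) (A : 'M[R]_n) : R :=
  inf [set a : R | eigenvalue A a].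

Definition norm2 (R : realType) (n : nat) (v : 'cV[R]_n) : R :=
  Num.sqrt (\sum_i (v i 0) ^+ 2).

Definition spec_norm (R : realType) (m n : nat) (A : 'M[R]_(m, n)) : R :=
  sup [set norm2 (A *m v) | v in [set v : 'cV[R]_n | norm2 v <= 1]].

(* Main.v *)
Require Import Defs.
From HB Require Import structures.
Set Warnings "-notation-overridden,-ambiguous-paths".
From mathcomp Require Import all_boot all_order all_algebra.
From mathcomp Require Import boolp classical_sets reals.
From mathcomp Require Import complex.
From mathcomp.algebra_tactics Require Import ring lra.
Import Order.TTheory GRing.Theory Num.Theory.
Local Open Scope ring_scope.

Section Key.
Variable R : realType.
Local Notation C := (R[i]).
Local Notation toC := (real_complex R).

Lemma key n (S : 'M[R]_n.+1) : S^T = S ->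
  exists m, eigenvalue S m /\
    forall u : 'cV_n.+1, m * (u^T *m u) 0 0 <= (u^T *m S *m u) 0 0.
Proof.
move=> Ssym.
set SC := map_mx toC S.
have SCreal : SC \is a realmx.
  by apply/mxOverP => i j; rewrite mxE complex_real.
have Sh : SC \is hermsymmx.
  apply: realsym_hermsym => //.
  by rewrite is_hermitianmxE expr0 scale1r map_mx_id // /SC map_trmx Ssym.
have /orthomx_spectralP SCE := hermitian_normalmx Sh.
set P := spectralmx SC in SCE; set sp := spectral_diag SC in SCE.
have Pu : P \is unitarymx := spectral_unitarymx SC.
have PU : P \in unitmx := unitarymx_unit Pu.
have spR : forall i, sp 0 i \is Num.real.
  by move=> i; apply: (mxOverP (hermitian_spectral_diag_real Sh)).
pose k := [arg min_(i < ord0) sp 0 i]%O.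
have kmin : forall i, sp 0 k <= sp 0 i.
  rewrite /k; case: (@real_arg_minP _ _ ord0 predT (fun i => sp 0 i) isT).
    by move=> i _; apply: spR.
  by move=> j _ H i; apply: H.
exists (complex.Re (sp 0 k)).
have spk : toC (complex.Re (sp 0 k)) = sp 0 k by rewrite RRe_real.
split.
  rewrite eigenvalue_root_char -(fmorph_root toC) map_char_poly.
  rewrite -eigenvalue_root_char.
  apply/eigenvalueP; exists (delta_mx 0 k *m P).
    rewrite -/SC {1}SCE !mulmxA -[_ *m P *m invmx P]mulmxA mulmxV // mulmx1.
    have E : delta_mx 0 k *m diag_mx sp = sp 0 k *: (delta_mx 0 k : 'rV_n.+1).
      apply/matrixP=> i j; rewrite mul_mx_diag !mxE.
      case: (j =P k) => [->|]; rewrite ?andbT ?andbF ?mulr0 ?mul0r ?mulr1 // ?ord1 ?eqxx ?mulr1n ?mul1r.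
      all: rewrite ?mulr1 ?mulr0 //.
    rewrite E -scalemxAl.
    congr (_ *: _); exact: esym spk.
  rewrite mulmx_free_eq0 ?row_free_unit //.
  apply/negP => /eqP/matrixP/(_ 0 k); rewrite !mxE !eqxx /=.
  by move/eqP; rewrite oner_eq0.
move=> u.
rewrite -lecR rmorphM /= spk.
have mapE : forall (X : 'M[R]_1), toC (X 0 0) = (map_mx toC X) 0 0.
  by move=> X; rewrite mxE.
rewrite !mapE !map_mxM -!map_trmx -/SC.
set uC := map_mx toC u.
have uCr : map_mx Num.Def.conjC uC = uC.
  apply/matrixP => i j; rewrite !mxE; apply: conj_Creal.
  by rewrite complex_real.
have uCt : uC^T = map_mx Num.Def.conjC (uC^T) by rewrite -map_trmx uCr.
rewrite uCt.
have PtP : map_mx Num.Def.conjC (P^T) *m P = 1%:M.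
  apply: mulmx1C. move/unitarymxP: Pu => H; exact: H.
rewrite -{2}[uC]mul1mx -PtP SCE invmx_unitary //.
set w := P *m uC.
have wE : map_mx Num.Def.conjC (w^T) = map_mx Num.Def.conjC (uC^T) *m map_mx Num.Def.conjC (P^T).
  by rewrite trmx_mul map_mxM.
rewrite !mulmxA -wE -!mulmxA -/w mulmxA.
rewrite !mxE mulr_sumr; apply: ler_sum => j _.
rewrite mul_mx_diag !mxE.
rewrite mulrAC [_ * sp 0 j]mulrC mulrA.
rewrite -mulrA; apply: ler_wpM2r; last exact: kmin.
by rewrite mulrC mul_conjC_ge0.

Qed.

Lemma rdot_ge0 {n} (v : 'rV[R]_n) : 0 <= (v *m v^T) 0 0.
Proof. by rewrite mxE; apply: sumr_ge0 => j _; rewrite mxE -expr2 sqr_ge0. Qed.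

Lemma rdot_gt0 {n} (v : 'rV[R]_n) : v != 0 -> 0 < (v *m v^T) 0 0.
Proof.
move=> vn0; rewrite lt_def rdot_ge0 andbT; apply/negP => /eqP H.
move: H; rewrite mxE => H.
have {}H : forall j, v 0 j = 0.
  have H0 : forall i, true -> 0 <= v 0 i * v^T i 0.
    by move=> i _; rewrite mxE -expr2 sqr_ge0.
  move=> j; have := psumr_eq0P H0 H (i := j) isT.
  by rewrite mxE -expr2 => /eqP; rewrite sqrf_eq0 => /eqP.
by move/negP: vn0; apply; apply/eqP/matrixP => i j; rewrite ord1 H mxE.
Qed.

Lemma cdot_ge0 {n} (u : 'cV[R]_n) : 0 <= (u^T *m u) 0 0.
Proof. by have := rdot_ge0 u^T; rewrite trmxK. Qed.

Lemma lmin n (S : 'M[R]_n.+1) : S^T = S ->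
  eigenvalue S (lambda_min S) /\ forall u : 'cV_n.+1, lambda_min S * (u^T *m u) 0 0 <= (u^T *m S *m u) 0 0.
Proof.
move=> Ssym; have [m [em Hm]] := @key n S Ssym.
have lb : lbound [set a : R | eigenvalue S a] m.
  move=> a /= /eigenvalueP [v vS vn0].
  have := Hm v^T; rewrite trmxK vS -scalemxAl [X in _ <= X]mxE.
  by rewrite ler_pM2r // rdot_gt0.
suff -> : lambda_min S = m by [].
rewrite /lambda_min; apply/le_anti/andP; split.
  by apply: (ge_inf (E := [set a : R | eigenvalue S a])) => //; exists m.
by apply: lb_le_inf => //; exists m.
Qed.

Lemma lmin' n (S : 'M[R]_n) : (0 < n)%N -> S^T = S ->
  eigenvalue S (lambda_min S) /\ forall u : 'cV_n, lambda_min S * (u^T *m u) 0 0 <= (u^T *m S *m u) 0 0.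
Proof. by case: n S => [//|n] S _; apply: lmin. Qed.

Lemma lmin_ge0 n (S : 'M[R]_n) : (0 < n)%N -> S^T = S -> psd_mx S -> 0 <= lambda_min S.
Proof.
move=> n0 Ssym Spsd; have [/eigenvalueP [v vS vn0] _] := @lmin' n S n0 Ssym.
have := Spsd v^T; rewrite trmxK vS -scalemxAl [X in _ <= X]mxE.
by rewrite pmulr_lge0 // rdot_gt0.
Qed.

Lemma norm2E {n} (v : 'cV[R]_n) : norm2 v = Num.sqrt ((v^T *m v) 0 0).
Proof. by rewrite /norm2 mxE; congr Num.sqrt; apply: eq_bigr => i _; rewrite mxE expr2. Qed.

Lemma cdot_eq0 {n} (v : 'cV[R]_n) : (v^T *m v) 0 0 = 0 -> v = 0.
Proof.
move=> H; have [//|vn0] := eqVneq v 0.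
have : v^T != 0 by apply: contra vn0 => /eqP H1; rewrite -[v]trmxK H1 trmx0.
by move/rdot_gt0; rewrite trmxK H ltxx.
Qed.

Lemma dotC {n} (p q : 'cV[R]_n) : (q^T *m p) 0 0 = (p^T *m q) 0 0.
Proof.
have E := trmx_mul q^T p; rewrite trmxK in E.
by rewrite -E [in RHS]mxE.
Qed.

Lemma e00B (A B : 'M[R]_1) : (A - B) 0 0 = A 0 0 - B 0 0.
Proof. by rewrite !mxE. Qed.
Lemma e00D (A B : 'M[R]_1) : (A + B) 0 0 = A 0 0 + B 0 0.
Proof. by rewrite !mxE. Qed.
Lemma e00Z c (A : 'M[R]_1) : (c *: A) 0 0 = c * A 0 0.
Proof. by rewrite !mxE. Qed.
Lemma e00T (A : 'M[R]_1) : (A^T) 0 0 = A 0 0.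
Proof. by rewrite !mxE. Qed.

Lemma CS {n} (p q : 'cV[R]_n) :
  (p^T *m q) 0 0 ^+ 2 <= (p^T *m p) 0 0 * (q^T *m q) 0 0.
Proof.
have [->|pn0] := eqVneq p 0.
  by rewrite trmx0 !mul0mx mxE expr0n mul0r.
have spos : 0 < (p^T *m p) 0 0.
  have : p^T != 0 by apply: contra pn0 => /eqP H1; rewrite -[p]trmxK H1 trmx0.
  by move/rdot_gt0; rewrite trmxK.
set s := (p^T *m p) 0 0; set t := (p^T *m q) 0 0; set r := (q^T *m q) 0 0.
have := cdot_ge0 (s *: q - t *: p).
have E : (s *: q - t *: p)^T = s *: q^T - t *: p^T by rewrite linearB !linearZ.
rewrite E mulmxBl !mulmxBr -!scalemxAl -!scalemxAr !e00B !e00Z.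
rewrite (dotC p q) -/s -/t -/r => H.
have H2 : 0 <= s * (s * r - t ^+ 2) by nra.
by rewrite pmulr_rge0 // subr_ge0 in H2.
Qed.

Lemma CS' {n} (p q : 'cV[R]_n) : `|(p^T *m q) 0 0| <= norm2 p * norm2 q.
Proof.
rewrite !norm2E -sqrtrM ?cdot_ge0 // -sqrtr_sqr ler_sqrt ?CS //.
by rewrite mulr_ge0 ?cdot_ge0.
Qed.

Lemma norm2Z {n} c (v : 'cV[R]_n) : norm2 (c *: v) = `|c| * norm2 v.
Proof.
have E : (c *: v)^T = c *: v^T by rewrite linearZ.
rewrite !norm2E E -scalemxAl -scalemxAr !e00Z mulrA -expr2.
by rewrite sqrtrM ?sqr_ge0 // sqrtr_sqr.
Qed.

Lemma norm2_ge0 {n} (v : 'cV[R]_n) : 0 <= norm2 v.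
Proof. by rewrite norm2E sqrtr_ge0. Qed.

Lemma norm2_0 {n} : norm2 (0 : 'cV[R]_n) = 0.
Proof. by rewrite norm2E trmx0 mul0mx mxE sqrtr0. Qed.

Lemma norm2_eq0 {n} (v : 'cV[R]_n) : norm2 v = 0 -> v = 0.
Proof.
rewrite norm2E => /eqP; rewrite sqrtr_eq0 => H; apply: cdot_eq0.
by apply/le_anti; rewrite H cdot_ge0.
Qed.

Lemma spec_props m n (B : 'M[R]_(m, n)) : (0 < n)%N ->
  0 <= spec_norm B /\ forall v, norm2 (B *m v) <= spec_norm B * norm2 v.
Proof.
move=> n0.
have Ssym : (- (B^T *m B))^T = - (B^T *m B) by rewrite linearN /= trmx_mul trmxK.
have [_ Hmu] := @lmin' n _ n0 Ssym.
set mu := lambda_min _ in Hmu.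
set E := ([set norm2 (B *m v) | v in [set v : 'cV[R]_n | norm2 v <= 1]])%classic.
have ub : forall v : 'cV_n, norm2 v <= 1 -> norm2 (B *m v) <= Num.sqrt `|mu|.
  move=> v v1; have := Hmu v.
  rewrite mulmxN mulNmx mulmxA -trmx_mul -mulmxA.
  have -> : (- ((B *m v)^T *m (B *m v))) 0 0 = - ((B *m v)^T *m (B *m v)) 0 0 by rewrite mxE.
  move=> H; rewrite norm2E ler_sqrt ?normr_ge0 //.
  have vv0 := cdot_ge0 v.
  have vv1 : (v^T *m v) 0 0 <= 1.
    move: v1; rewrite norm2E => v1.
    rewrite -(sqr_sqrtr vv0); have := sqrtr_ge0 ((v^T *m v) 0 0).
    move: v1; set a := Num.sqrt _ => v1 a0; nra.
  have := ler_norm (- mu); rewrite normrN => Hn.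
  have h1 : - mu * (v^T *m v) 0 0 <= `|mu| * (v^T *m v) 0 0 by apply: ler_wpM2r.
  have h2 : `|mu| * (v^T *m v) 0 0 <= `|mu| by apply: ler_piMr.
  lra.
have E0 : E (norm2 (B *m 0)) by exists 0 => //=; rewrite norm2_0.
have hs : has_sup E.
  split; first by exists (norm2 (B *m 0)).
  exists (Num.sqrt `|mu|) => _ [v /= v1 <-]; exact: ub.
have supub := sup_upper_bound hs.
have z0 : 0 <= spec_norm B.
  by apply: le_trans (supub _ E0); exact: norm2_ge0.
split => // v.
have [v0|vn0] := eqVneq (norm2 v) 0.
  by rewrite (norm2_eq0 v v0) mulmx0 !norm2_0 mulr0.
have vpos : 0 < norm2 v by rewrite lt_def vn0 norm2_ge0.
have : E (norm2 (B *m ((norm2 v)^-1 *: v))).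
  exists ((norm2 v)^-1 *: v) => //=.
  by rewrite norm2Z ger0_norm ?invr_ge0 ?norm2_ge0 // mulVf.
move/supub; rewrite -scalemxAr norm2Z ger0_norm ?invr_ge0 ?norm2_ge0 //.
by rewrite mulrC ler_pdivrMr.
Qed.

Lemma sqrt_le_of (e t : R) : 0 <= t -> e <= t ^+ 2 -> Num.sqrt e <= t.
Proof.
move=> t0 et; rewrite -(ger0_norm t0) -sqrtr_sqr ler_sqrt //.
exact: sqr_ge0.
Qed.

Lemma quad (x y z a b : R) : 0 <= a -> 0 <= b ->
  ((x + y) - Num.sqrt ((x - y) ^+ 2 + 4 * z ^+ 2)) / 2 * (a ^+ 2 + b ^+ 2)
  <= y * a ^+ 2 + x * b ^+ 2 - 2 * z * a * b.
Proof.
move=> a0 b0.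
set s := Num.sqrt _.
have s0 : 0 <= s := sqrtr_ge0 _.
have ss : s ^+ 2 = (x - y) ^+ 2 + 4 * z ^+ 2 by rewrite sqr_sqrtr // addr_ge0 ?sqr_ge0 // mulr_ge0 // sqr_ge0.
set P := (y - x + s) / 2.
set Q := (x - y + s) / 2.
have P0 : 0 <= P.
  rewrite /P; apply: divr_ge0 => //.
  have : (y - x) ^+ 2 <= s ^+ 2 by rewrite ss; nra.
  nra.
have Q0 : 0 <= Q.
  rewrite /Q; apply: divr_ge0 => //.
  have : (x - y) ^+ 2 <= s ^+ 2 by rewrite ss; nra.
  nra.
have PQ : P * Q = z ^+ 2 by rewrite /P /Q; nra.
suff : 0 <= P * a ^+ 2 + Q * b ^+ 2 - 2 * z * a * b.
  rewrite /P /Q; lra.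
have [P00|Ppos] := eqVneq P 0.
  have z0 : z = 0.
    by apply/eqP; rewrite -sqrf_eq0 -PQ P00 mul0r.
  by rewrite P00 z0; nra.
have Pp : 0 < P by rewrite lt_def Ppos P0.
rewrite -(pmulr_rge0 _ Pp).
have -> : P * (P * a ^+ 2 + Q * b ^+ 2 - 2 * z * a * b) = (P * a - z * b) ^+ 2.
  have e : (P * a - z * b) ^+ 2 = P * (P * a ^+ 2 + Q * b ^+ 2 - 2 * z * a * b) + (z ^+ 2 - P * Q) * b ^+ 2 by ring.
  by rewrite e PQ subrr mul0r addr0.
exact: sqr_ge0.
Qed.

Lemma part2 (x y z : R) : 0 <= x -> 0 <= y -> 0 <= z ->
  z <= Num.sqrt (x * y) / 2 ->
  Num.min x y / 3 <= ((x + y) - Num.sqrt ((x - y) ^+ 2 + 4 * z ^+ 2)) / 2.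
Proof.
move=> x0 y0 z0 hz.
have z2 : 4 * z ^+ 2 <= x * y.
  have h : 2 * z <= Num.sqrt (x * y) by lra.
  have hs := sqrtr_ge0 (x * y).
  have : (2 * z) ^+ 2 <= Num.sqrt (x * y) ^+ 2 by nra.
  by rewrite sqr_sqrtr ?mulr_ge0 //; nra.
have [xy|yx] := leP x y.
  have hm : Num.min x y <= x by rewrite ge_min lexx.
  have : Num.sqrt ((x - y) ^+ 2 + 4 * z ^+ 2) <= y + x / 3.
    by apply: sqrt_le_of; nra.
  lra.
have hm : Num.min x y <= y by rewrite ge_min lexx orbT.
have : Num.sqrt ((x - y) ^+ 2 + 4 * z ^+ 2) <= x + y / 3.
  by apply: sqrt_le_of; nra.
lra.
Qed.
End Key.

Lemma symQ {R : realType} {D p : nat} {M : 'M[R]_D} (Q : 'M[R]_(D, p)) :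
  M^T = M -> (Q^T *m M *m Q)^T = Q^T *m M *m Q.
Proof. by move=> Ms; rewrite !trmx_mul trmxK Ms mulmxA. Qed.

Lemma psdQ {R : realType} {D p : nat} {M : 'M[R]_D} (Q : 'M[R]_(D, p)) :
  psd_mx M -> psd_mx (Q^T *m M *m Q).
Proof.
move=> Mp v; have := Mp (Q *m v).
by rewrite trmx_mul !mulmxA.
Qed.

Theorem lemma2 (R : realType) (D d : nat) (M : 'M[R]_D) (L : 'M[R]_D)
    (U : 'M[R]_(D, d)) (V : 'M[R]_(D, D - d)) :
  (1 <= d)%N -> (d < D)%N ->
  symmetric_mx M -> psd_mx M ->
  \rank L = d ->
  (U^T == L)%MS -> U^T *m U = 1%:M ->
  (V^T == kermx L^T)%MS -> V^T *m V = 1%:M ->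
  let x := lambda_min (V^T *m M *m V) in
  let y := lambda_min (U^T *m M *m U) in
  let z := spec_norm (U^T *m M *m V) in
  ((x + y) - Num.sqrt ((x - y) ^+ 2 + 4 * z ^+ 2)) / 2 <= lambda_min M /\
  (z <= Num.sqrt (x * y) / 2 -> Num.min x y / 3 <= lambda_min M).
Proof.
move=> hd1 hdD.
have eD : addn d (subn D d) = D by rewrite subnKC // ltnW.
move: (subn D d) eD V => K eD V; subst D.
move=> Msym Mpsd _ hUL hUU hVL hVV x y z.
have K0 : (0 < K)%N by rewrite -(ltn_add2l d) addn0.
case/andP: hVL => hV1 _; have VL : V^T *m L^T = 0 by apply/sub_kermxP.
case/andP: hUL => hU1 _; case/submxP: hU1 => X UX.
have LV : L *m V = 0 by rewrite -[L]trmxK -[V]trmxK -trmx_mul VL trmx0.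
have UV : U^T *m V = 0 by rewrite UX -mulmxA LV mulmx0.
have VU : V^T *m U = 0 by rewrite -(trmxK (V^T *m U)) trmx_mul trmxK UV trmx0.
set W := row_mx U V.
have WtW : W^T *m W = 1%:M.
  by rewrite tr_row_mx mul_col_row hUU hVV UV VU -scalar_mx_block.
have WWt := mulmx1C WtW.
rewrite tr_row_mx mul_row_col in WWt.
have dK0 : (0 < d + K)%N by rewrite addn_gt0 hd1.
have [eM _] := @lmin' R _ M dK0 Msym.
have [_ Aray] := @lmin' R _ _ hd1 (symQ U Msym).
have [_ Cray] := @lmin' R _ _ K0 (symQ V Msym).
have [z0 Bz] := @spec_props R _ _ (U^T *m M *m V) K0.
have x0 : 0 <= x := @lmin_ge0 R _ _ K0 (symQ V Msym) (psdQ V Mpsd).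
have y0 : 0 <= y := @lmin_ge0 R _ _ hd1 (symQ U Msym) (psdQ U Mpsd).
set lam := lambda_min M in eM *.
suff main : ((x + y) - Num.sqrt ((x - y) ^+ 2 + 4 * z ^+ 2)) / 2 <= lam.
  split => // hz; apply: le_trans main; exact: part2.
case/eigenvalueP: eM => w wM wn0.
pose u := w^T.
have Mu : M *m u = lam *: u by rewrite /u -{1}Msym -trmx_mul wM linearZ.
pose a := U^T *m u.
pose b := V^T *m u.
have u_dec : u = U *m a + V *m b by rewrite /a /b !mulmxA -mulmxDl WWt mul1mx.
have aT : a^T = u^T *m U by rewrite /a trmx_mul [U^T^T]trmxK.
have bT : b^T = u^T *m V by rewrite /b trmx_mul [V^T^T]trmxK.
have uu : (u^T *m u) 0 0 = (a^T *m a) 0 0 + (b^T *m b) 0 0.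
  by rewrite {2}u_dec mulmxDr !mulmxA -aT -bT e00D.
have upos : 0 < (u^T *m u) 0 0 by rewrite /u trmxK rdot_gt0.
have eqA : lam * (a^T *m a) 0 0 =
    (a^T *m (U^T *m M *m U) *m a) 0 0 + (a^T *m (U^T *m M *m V) *m b) 0 0.
  transitivity ((a^T *m U^T *m M *m u) 0 0).
    by rewrite -mulmxA Mu -scalemxAr e00Z -mulmxA.
  by rewrite {1}u_dec mulmxDr e00D !mulmxA.
have eqB : lam * (b^T *m b) 0 0 =
    (b^T *m (V^T *m M *m V) *m b) 0 0 + (a^T *m (U^T *m M *m V) *m b) 0 0.
  transitivity ((b^T *m V^T *m M *m u) 0 0).
    by rewrite -mulmxA Mu -scalemxAr e00Z -mulmxA.
  rewrite {1}u_dec mulmxDr e00D addrC !mulmxA; congr (_ + _).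
  by rewrite -e00T !trmx_mul !trmxK Msym !mulmxA.
set t := (a^T *m (U^T *m M *m V) *m b) 0 0 in eqA eqB.
have ht : `|t| <= norm2 a * (z * norm2 b).
  have -> : t = (a^T *m ((U^T *m M *m V) *m b)) 0 0 by rewrite /t !mulmxA.
  apply: le_trans (@CS' R _ a _) _.
  by apply: ler_wpM2l; [exact: norm2_ge0 | exact: Bz].
have aa : (a^T *m a) 0 0 = norm2 a ^+ 2 by rewrite norm2E sqr_sqrtr // cdot_ge0.
have bb : (b^T *m b) 0 0 = norm2 b ^+ 2 by rewrite norm2E sqr_sqrtr // cdot_ge0.
have hA := Aray a; have hC := Cray b.
rewrite -/x in hC; rewrite -/y in hA.
have hq := @quad R x y z _ _ (@norm2_ge0 R _ a) (@norm2_ge0 R _ b).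
rewrite uu aa bb in upos.
rewrite aa in eqA hA; rewrite bb in eqB hC.
have htl : - (norm2 a * (z * norm2 b)) <= t by move: ht; rewrite ler_norml => /andP[].
set c := _ / 2 in hq *.
set al := norm2 a in hq upos eqA hA htl; set be := norm2 b in hq upos eqB hC htl.
have : c * (al ^+ 2 + be ^+ 2) <= lam * (al ^+ 2 + be ^+ 2) by nra.
by rewrite ler_pM2r.
Qed.
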